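(* Let $R$ be a $K$-ring with a degree function such that $R\neq K$. Then every connected component of the projective line $\mathbb{P}(R)$ has infinite diameter.
   Context: A ring $R$ (associative, with $1$, unit group $R^*$) is a $K$-ring with a degree function if $K:=R^*\cup\{0\}$ is a (not necessarily commutative) field and there is a function $\deg:R\to\{-\infty\}\cup\{0,1,2,\dots\}$ with: $\deg a=-\infty$ iff $a=0$; $\deg a=0$ iff $a\in R^*$; $\deg(a+b)\le\max\{\deg a,\deg b\}$; $\deg(ab)=\deg a+\deg b$, for all $a,b\in R$. A pair $(a,b)\in R^2$ is admissible if it is the first row of an invertible $2\times2$ matrix over $R$; $\mathbb{P}(R)$ is the set of cyclic submodules $R(a,b)$ of the left module $R^2$ with $(a,b)$ admissible. Two points $R(a,b)$, $R(c,d)$ are distant iff $\begin{pmatrix}a&b\\c&d\end{pmatrix}$ is invertible; connected components and diameter (supremum of path distances within a component) refer to the graph on $\mathbb{P}(R)$ whose edges are pairs of distant points. *)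

(* Defs.v *)
From HB Require Import structures.
From mathcomp Require Import all_boot all_order all_algebra.
Set Implicit Arguments. Unset Strict Implicit. Unset Printing Implicit Defensive.
Import GRing.Theory.
Local Open Scope ring_scope.

Section KRing.
Variable R : unitRingType.

Definition inK (a : R) : Prop := a = 0 \/ a \is a GRing.unit.

Definition K_is_field : Prop :=
  inK 0 /\ inK 1 /\
  (forall a b, inK a -> inK b -> inK (a + b)) /\
  (forall a, inK a -> inK (- a)) /\
  (forall a b, inK a -> inK b -> inK (a * b)) /\
  (forall a, inK a -> a <> 0 -> exists2 b, inK b & (a * b = 1 /\ b * a = 1)).

(* degrees in {-oo} u N : None = -oo *)
Definition deg_le (x y : option nat) : bool :=
  match x, y with
  | None, _ => true
  | Some _, None => false
  | Some m, Some n => (m <= n)%N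
  end.
Definition deg_max (x y : option nat) : option nat :=
  match x, y with
  | None, _ => y
  | _, None => x
  | Some m, Some n => Some (maxn m n)
  end.
Definition deg_add (x y : option nat) : option nat :=
  match x, y with
  | Some m, Some n => Some (m + n)%N
  | _, _ => None
  end.

Definition is_degree_function (deg : R -> option nat) : Prop :=
  [/\ (forall a, deg a = None <-> a = 0),
      (forall a, deg a = Some 0%N <-> a \is a GRing.unit),
      (forall a b, deg_le (deg (a + b)) (deg_max (deg a) (deg b))) &
      (forall a b, deg (a * b) = deg_add (deg a) (deg b))].

Definition invertible2 (a b c d : R) : Prop :=
  exists x y z w : R,
    (a * x + b * z = 1 /\ a * y + b * w = 0 /\ c * x + d * z = 0 /\ c * y + d * w = 1) /\
    (x * a + y * c = 1 /\ x * b + y * d = 0 /\ z * a + w * c = 0 /\ z * b + w * d = 1).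

Definition admissible (a b : R) : Prop := exists c d, invertible2 a b c d.

Definition cyc (a b : R) : R * R -> Prop := fun v => exists r : R, v = (r * a, r * b).

Definition is_point (p : R * R -> Prop) : Prop :=
  exists a b, admissible a b /\ p = cyc a b.

Definition distant (p q : R * R -> Prop) : Prop :=
  exists a b c d, [/\ p = cyc a b, q = cyc c d & invertible2 a b c d].

Inductive walk : nat -> (R * R -> Prop) -> (R * R -> Prop) -> Prop :=
  | walk0 p : is_point p -> walk 0 p p
  | walkS n p q r : is_point p -> distant p q -> walk n q r -> walk n.+1 p r.

Definition connected (p q : R * R -> Prop) : Prop := exists n, walk n p q.

Definition dist_le (p q : R * R -> Prop) (n : nat) : Prop :=
  exists2 m, (m <= n)%N & walk m p q.

End KRing.

(* Main.v *)
Require Import Defs.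
From HB Require Import structures.
From mathcomp Require Import all_boot all_order all_algebra zify.
Set Implicit Arguments. Unset Strict Implicit. Unset Printing Implicit Defensive.
Import GRing.Theory.
Local Open Scope ring_scope.

Section Mx.
Variable R : unitRingType.

Definition o1 : 'I_2 := @Ordinal 2 1 isT.

Definition mk2 (a b c d : R) : 'M[R]_2 :=
  \matrix_(i < 2, j < 2) if (i == 0 :> nat) then (if (j == 0 :> nat) then a else b)
                           else (if (j == 0 :> nat) then c else d).

Lemma mk_eta (M : 'M[R]_2) : M = mk2 (M ord0 ord0) (M ord0 o1) (M o1 ord0) (M o1 o1).
Proof.
apply/matrixP => i j; rewrite !mxE.
case: i => [[|[|i]] Hi] //; case: j => [[|[|j]] Hj] //=;
by congr (M _ _); apply: val_inj.
Qed.

Lemma mul_mk a b c d x y z w :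
  mk2 a b c d *m mk2 x y z w = mk2 (a*x + b*z) (a*y+b*w) (c*x+d*z) (c*y+d*w).
Proof.
apply/matrixP => i j; rewrite !mxE big_ord_recl big_ord1 !mxE /=.
by case: i => [[|[|i]] Hi] //; case: j => [[|[|j]] Hj].
Qed.

Lemma mk_inj a b c d a' b' c' d' : mk2 a b c d = mk2 a' b' c' d' ->
  [/\ a = a', b = b', c = c' & d = d'].
Proof.
move=> H.
have E i j : mk2 a b c d i j = mk2 a' b' c' d' i j by rewrite H.
have := E ord0 ord0; have := E ord0 o1; have := E o1 ord0; have := E o1 o1.
by rewrite !mxE /= => -> -> -> ->.
Qed.

Lemma one_mk : (1%:M : 'M[R]_2) = mk2 1 0 0 1.
Proof.
apply/matrixP => i j; rewrite !mxE.
by case: i => [[|[|i]] Hi] //; case: j => [[|[|j]] Hj].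
Qed.

Definition invm (M : 'M[R]_2) := exists N, M *m N = 1%:M /\ N *m M = 1%:M.

Lemma inv_mul A B : invm A -> invm B -> invm (A *m B).
Proof.
move=> [Ai [H1 H2]] [Bi [H3 H4]]; exists (Bi *m Ai); split.
  by rewrite mulmxA -(mulmxA A) H3 mulmx1 H1.
by rewrite mulmxA -(mulmxA Bi) H2 mulmx1 H4.
Qed.

Lemma inv2P a b c d : invertible2 a b c d <-> invm (mk2 a b c d).
Proof.
split.
  move=> [x [y [z [w [[h1 [h2 [h3 h4]]] [h5 [h6 [h7 h8]]]]]]]].
  exists (mk2 x y z w); rewrite !mul_mk one_mk.
  by rewrite h1 h2 h3 h4 h5 h6 h7 h8.
move=> [N []]; rewrite (mk_eta N) !mul_mk one_mk => /mk_inj [h1 h2 h3 h4] /mk_inj [h5 h6 h7 h8].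
by do 4 eexists; split; (split; [|split; [|split]]); eassumption.
Qed.


Lemma inv_swap a b c d : invm (mk2 a b c d) -> invm (mk2 c d a b).
Proof.
move=> H.
have -> : mk2 c d a b = mk2 0 1 1 0 *m mk2 a b c d.
  by rewrite mul_mk !mul0r !mul1r !add0r !addr0.
apply: inv_mul => //; exists (mk2 0 1 1 0).
by rewrite mul_mk one_mk !mul0r !mul1r !add0r !addr0.
Qed.

Lemma inv_step a b c d x : invm (mk2 a b c d) -> invm (mk2 c d (x*c - a) (x*d - b)).
Proof.
move=> H.
have -> : mk2 c d (x*c - a) (x*d - b) = mk2 0 1 (-1) x *m mk2 a b c d.
  by rewrite mul_mk !mul0r !mul1r !add0r !mulN1r ![- _ + _]addrC.
apply: inv_mul => //; exists (mk2 x (-1) 1 0).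
rewrite !mul_mk one_mk !mul0r !mulr0 !mul1r !mulr1 !mulN1r !add0r !addr0.
by rewrite opprK addNr subrr.
Qed.

End Mx.


Section Walks.
Variable R : unitRingType.

Lemma distant_sym (p q : R * R -> Prop) : distant p q -> distant q p.
Proof.
move=> [a [b [c [d [Hp Hq Hi]]]]]; exists c, d, a, b; split => //.
by apply/inv2P; apply: inv_swap; apply/inv2P.
Qed.

Lemma walk_app n (p q q' : R * R -> Prop) :
  walk n p q -> distant q q' -> is_point q' -> walk n.+1 p q'.
Proof.
elim=> {n p q} [p Hp|n p q r Hp Hd Hw IH] Hd' Hq'.
  by apply: walkS Hp Hd' (walk0 Hq').
exact: walkS Hp Hd (IH Hd' Hq').
Qed.

Lemma walk_rev n (p q : R * R -> Prop) : walk n p q -> walk n q p.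
Proof.
elim=> {n p q} [p Hp|n p q r Hp Hd Hw IH]; first exact: walk0.
exact: walk_app IH (distant_sym Hd) Hp.
Qed.

End Walks.


Section Main.
Variable R : unitRingType.
Variable deg : R -> option nat.
Hypothesis HK : K_is_field R.
Hypothesis Hdeg : is_degree_function deg.

Lemma unit_of_rinv (a b : R) : a * b = 1 -> a \is a GRing.unit.
Proof.
move=> H; case: Hdeg => _ Hu _ Hm.
apply/(Hu a).1; have := Hm a b; rewrite H (proj2 (Hu 1) (unitr1 _)).
case: (deg a) => [m|]; case: (deg b) => [n|] //= [] E.
by congr Some; lia.
Qed.

Lemma notK_deg (x : R) : ~ inK x -> exists m, deg x = Some m.+1.
Proof.
case: Hdeg => Hz Hu _ _ Hx.
case E: (deg x) => [[|m]|]; last 2 first.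
- by exists m.
- by case: Hx; left; apply/(Hz x).1.
- by case: Hx; right; apply/(Hu x).1.
Qed.

Definition dlt (o1 o2 : option nat) : bool :=
  match o1, o2 with
  | _, None => false
  | None, Some _ => true
  | Some m, Some n => (m < n)%N
  end.

Lemma deg_grow (a b x : R) : ~ inK x -> dlt (deg a) (deg b) -> dlt (deg b) (deg (x*b - a)).
Proof.
move=> /notK_deg [m Hx]; case: Hdeg => _ _ Ha Hm.
have := Ha (x*b - a) a; rewrite subrK Hm Hx.
case: (deg b) => [n|] //; case: (deg a) => [k|]; case: (deg (x*b - a)) => [j|] //=; lia.
Qed.


Definition lam (X0 Z0 r1 r2 : R) := r1 * X0 + r2 * Z0.

Lemma lam_step X0 Z0 x w1 w2 v1 v2 :
  lam X0 Z0 (x*v1 - w1) (x*v2 - w2) = x * lam X0 Z0 v1 v2 - lam X0 Z0 w1 w2.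
Proof.
rewrite /lam !mulrBl mulrDr !mulrA opprD.
by rewrite [RHS]addrACA.
Qed.

Inductive chain (c0 d0 a0 b0 : R) : nat -> R -> R -> R -> R -> Prop :=
| ch0 : chain c0 d0 a0 b0 0 c0 d0 a0 b0
| chS N w1 w2 v1 v2 x : chain c0 d0 a0 b0 N w1 w2 v1 v2 -> (N = 0%N \/ ~ inK x) ->
    chain c0 d0 a0 b0 N.+1 v1 v2 (x*v1 - w1) (x*v2 - w2).

Lemma chain_inv c0 d0 a0 b0 N w1 w2 v1 v2 : invm (mk2 c0 d0 a0 b0) ->
  chain c0 d0 a0 b0 N w1 w2 v1 v2 -> invm (mk2 w1 w2 v1 v2).
Proof. by move=> H0; elim=> // {}N {}w1 {}w2 {}v1 {}v2 x _ IH _; apply: inv_step. Qed.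

Lemma chain_S c0 d0 a0 b0 N w1 w2 v1 v2 : chain c0 d0 a0 b0 N.+1 w1 w2 v1 v2 ->
  exists u1 u2 x, [/\ chain c0 d0 a0 b0 N u1 u2 w1 w2, (N = 0%N \/ ~ inK x),
                     v1 = x*w1 - u1 & v2 = x*w2 - u2].
Proof. by move=> H; inversion H; subst; do 3 eexists; split; eauto. Qed.

Lemma chain_lam c0 d0 a0 b0 X0 Z0 N w1 w2 v1 v2 :
  c0*X0 + d0*Z0 = 1 -> a0*X0 + b0*Z0 = 0 ->
  chain c0 d0 a0 b0 N w1 w2 v1 v2 ->
  (N = 0%N /\ lam X0 Z0 w1 w2 = 1 /\ lam X0 Z0 v1 v2 = 0) \/
  ((0 < N)%N /\ dlt (deg (lam X0 Z0 w1 w2)) (deg (lam X0 Z0 v1 v2))).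
Proof.
move=> HX HZ; elim=> [|{}N {}w1 {}w2 {}v1 {}v2 x _ IH Hc]; first by left.
right; split => //; rewrite lam_step.
case: IH => [[_ [-> ->]]|[HN Hlt]].
  rewrite mulr0 add0r.
  case: Hdeg => Hz Hu _ _.
  by rewrite (proj2 (Hz 0) erefl) (proj2 (Hu _) (unitrN1 _)).
case: Hc => [E|Hx]; first by rewrite E in HN.
exact: deg_grow.
Qed.

End Main.


Section Main2.
Variable R : unitRingType.
Variable deg : R -> option nat.
Hypothesis HK : K_is_field R.
Hypothesis Hdeg : is_degree_function deg.

Lemma row_cancel (u v1 v2 Y W : R) : v1*Y + v2*W = 1 -> u*v1 = v1 -> u*v2 = v2 -> u = 1.
Proof.
by move=> H H1 H2; rewrite -[u]mulr1 -H mulrDr !mulrA H1 H2.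
Qed.

Lemma rep (e v1 v2 w1 w2 a b : R) : e \is a GRing.unit -> invm (mk2 w1 w2 v1 v2) ->
  cyc (e*v1) (e*v2) = cyc a b -> exists g s, [/\ a = g*v1, b = g*v2 & s*g = 1].
Proof.
move=> He [N [H1 _]] Heq.
move: H1; rewrite (mk_eta N) mul_mk one_mk => /mk_inj [_ _ _ HY].
have : cyc a b (a, b) by exists 1; rewrite !mul1r.
rewrite -Heq => -[r [Ha Hb]].
have : cyc (e*v1) (e*v2) (e*v1, e*v2) by exists 1; rewrite !mul1r.
rewrite Heq => -[t [Ht1 Ht2]].
rewrite Ha in Ht1; rewrite Hb in Ht2.
exists (r*e), (e^-1 * t); split; rewrite ?Ha ?Hb ?mulrA //.
apply: (row_cancel HY).
  by rewrite -!mulrA -Ht1 mulKr.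
by rewrite -!mulrA -Ht2 mulKr.
Qed.


Lemma decomp (w1 w2 v1 v2 g s c d : R) : invm (mk2 w1 w2 v1 v2) -> s*g = 1 ->
  invm (mk2 (g*v1) (g*v2) c d) ->
  exists al y, [/\ al \is a GRing.unit, c = al*w1 + y*v1 & d = al*w2 + y*v2].
Proof.
move=> [Ai [HA1 HA2]] Hsg [Bi [HB1 HB2]].
set A := mk2 w1 w2 v1 v2 in HA1 HA2 *.
set B := mk2 (g*v1) (g*v2) c d in HB1 HB2 *.
have HCA : (B *m Ai) *m A = B by rewrite -mulmxA HA2 mulmx1.
have HCi : (B *m Ai) *m (A *m Bi) = 1%:M.
  by rewrite mulmxA -(mulmxA B) HA2 mulmx1 HB1.
set X := Ai ord0 ord0; set Y := Ai ord0 o1; set Z := Ai o1 ord0; set W := Ai o1 o1.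
have EAi : Ai = mk2 X Y Z W by exact: mk_eta.
move: HA1; rewrite EAi /A mul_mk one_mk => /mk_inj [_ _ H10 H11].
have EC : B *m Ai = mk2 0 g (c * X + d * Z) (c * Y + d * W).
  by rewrite EAi /B mul_mk -!mulrA -!mulrDr H10 H11 mulr0 mulr1.
rewrite EC in HCA HCi.
move: HCA; rewrite /A /B mul_mk => /mk_inj [_ _ Hc Hd].
move: HCi; rewrite (mk_eta (A *m Bi)) mul_mk one_mk => /mk_inj [_ H01 _ H11'].
move: H01; rewrite mul0r add0r => H01.
set s' := (A *m Bi) o1 o1 in H01 H11'.
have s0 : s' = 0 by rewrite -[s']mul1r -Hsg -mulrA H01 mulr0.
rewrite s0 mulr0 addr0 in H11'.
exists (c * X + d * Z), (c * Y + d * W); split => //.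
exact: (@unit_of_rinv R deg Hdeg _ ((A *m Bi) ord0 o1) H11').
Qed.

End Main2.


Section Main3.
Variable R : unitRingType.
Variable deg : R -> option nat.
Hypothesis HK : K_is_field R.
Hypothesis Hdeg : is_degree_function deg.

Lemma alg1 (al z w v : R) : al*w + -(al*z)*v = -al * (z*v - w).
Proof. by rewrite mulrBr !mulNr opprK mulrA addrC. Qed.

Lemma alg2 (al z x w u : R) : z \is a GRing.unit ->
  al*w + -(al*z)*(x*w - u) = -(al*z) * ((x - z^-1)*w - u).
Proof.
move=> Hz.
by rewrite [(x - z^-1) * w]mulrBl [x * w - _ - u]addrAC [RHS]mulrBr [- (al * z) * (z^-1 * w)]mulNr [al * z * (z^-1 * w)]mulrA mulrK // opprK [RHS]addrC.
Qed.

Lemma walk0_eq (p q : R * R -> Prop) : walk 0 p q -> p = q.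
Proof.
have E : forall n (p' q' : R * R -> Prop), walk n p' q' -> n = 0%N -> p' = q'.
  by move=> n p' q' [].
by move=> H; apply: E H _.
Qed.

Lemma walkS_inv k (p r : R * R -> Prop) : walk k.+1 p r -> exists q, distant p q /\ walk k q r.
Proof.
have E : forall n (p' r' : R * R -> Prop), walk n p' r' -> n = k.+1 ->
   exists q, distant p' q /\ walk k q r'.
  by move=> n p' r' [//|n0 p0 q0 r0 _ Hd Hw [<-]]; exists q0.
by move=> H; apply: E H _.
Qed.

Lemma main_bound (c0 d0 a0 b0 X0 Z0 : R) :
  invm (mk2 c0 d0 a0 b0) -> c0*X0 + d0*Z0 = 1 -> a0*X0 + b0*Z0 = 0 ->
  forall k q N (w1 w2 v1 v2 e : R), walk k q (cyc a0 b0) ->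
  chain c0 d0 a0 b0 N w1 w2 v1 v2 ->
  e \is a GRing.unit -> q = cyc (e*v1) (e*v2) -> (N <= k)%N.
Proof.
move=> Hinv0 HX HZ k; elim: k => [|k IH] q N w1 w2 v1 v2 e Hw Hch He Hq.
  case: N Hch => // N Hch; exfalso.
  have Hq0 := walk0_eq Hw.
  have : cyc a0 b0 (e*v1, e*v2) by rewrite -Hq0 Hq; exists 1; rewrite !mul1r.
  move=> [r [E1 E2]].
  have Hl : lam X0 Z0 v1 v2 = 0.
    apply: (mulrI He); rewrite mulr0 /lam mulrDr !mulrA E1 E2 -!mulrA -mulrDr HZ mulr0.
    done.
  case: (chain_lam Hdeg HX HZ Hch) => [[]//|[_]].
  rewrite Hl; case: Hdeg => Hz _ _ _; rewrite (proj2 (Hz 0) erefl).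
  by case: (deg _).
have [q' [Hd Hw']] := walkS_inv Hw.
case: N Hch => [|M] Hch; first done.
have [u1 [u2 [x [HchM Hc Hv1 Hv2]]]] := chain_S Hch.
case: Hd => [a [b [c [d [Hqa Hq' Hi]]]]].
have Heq : cyc (e*v1) (e*v2) = cyc a b by rewrite -Hq.
have Hinv := chain_inv Hinv0 Hch.
have [g [s [Ea Eb Hsg]]] := rep He Hinv Heq.
move/inv2P: Hi; rewrite Ea Eb => Hi.
have [al [y [Hal Ec Ed]]] := decomp Hdeg Hinv Hsg Hi.
case: (eqVneq y 0) => [y0|yn0].
  have := IH q' M u1 u2 w1 w2 al Hw' HchM Hal.
  by rewrite Hq' Ec Ed y0 !mul0r !addr0 ltnS => /(_ erefl).
set z := - (al^-1 * y).
have Hy : y = - (al * z) by rewrite /z mulrN opprK mulVKr.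
case: HK => _ [_ [Hadd _]].
case: (boolP (z \is a GRing.unit)) => Hzu.
  have Hc' : M = 0%N \/ ~ inK (x - z^-1).
    case: Hc => [->|Hx]; [by left|right] => Hin; apply: Hx.
    have Hzi : inK z^-1 by right; rewrite unitrV.
    by have := Hadd _ _ Hin Hzi; rewrite subrK.
  have Hch2 := chS HchM Hc'.
  have Hu : - (al * z) \is a GRing.unit by rewrite unitrN unitrMl.
  have := IH q' M.+1 _ _ _ _ _ Hw' Hch2 Hu.
  rewrite Hq' Ec Ed Hy Hv1 Hv2 !alg2 // => /(_ erefl) H.
  exact: leqW.
have HnK : ~ inK z.
  case=> [z0|]; last by rewrite (negbTE Hzu).
  by move: yn0; rewrite Hy z0 mulr0 oppr0 eqxx.
have Hch2 := chS Hch (or_intror HnK).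
have Hu : - al \is a GRing.unit by rewrite unitrN.
have := IH q' M.+2 _ _ _ _ _ Hw' Hch2 Hu.
rewrite Hq' Ec Ed Hy !alg1 => /(_ erefl) H. lia.
Qed.

End Main3.


Lemma build (R : unitRingType) (c0 d0 a0 b0 t : R) : invm (mk2 c0 d0 a0 b0) -> ~ inK t ->
  is_point (cyc a0 b0) ->
  forall N, exists w1 w2 v1 v2, chain c0 d0 a0 b0 N w1 w2 v1 v2 /\ walk N (cyc a0 b0) (cyc v1 v2).
Proof.
move=> Hinv0 Ht Hp; elim=> [|N [w1 [w2 [v1 [v2 [Hch Hw]]]]]].
  by exists c0, d0, a0, b0; split; [exact: ch0 | exact: walk0].
have Hch2 := chS Hch (or_intror Ht).
exists v1, v2, (t*v1 - w1), (t*v2 - w2); split => //.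
have Hi := chain_inv Hinv0 Hch2.
apply: walk_app Hw _ _.
  by exists v1, v2, (t*v1 - w1), (t*v2 - w2); split => //; apply/inv2P.
by exists (t*v1 - w1), (t*v2 - w2); split => //; exists v1, v2; apply/inv2P; apply: inv_swap.
Qed.

Theorem mainTheorem11 (R : unitRingType) (deg : R -> option nat)
  (HK : K_is_field R) (Hdeg : is_degree_function deg)
  (HRK : exists r : R, ~ inK r) :
  forall p : R * R -> Prop, is_point p ->
  forall n : nat, exists q r : R * R -> Prop,
    [/\ connected p q, connected p r & ~ dist_le q r n].
Proof.
move=> p [a0 [b0 [[c0 [d0 Hi]] Hp]]] n; subst p.
have Hpt : is_point (cyc a0 b0) by exists a0, b0; split => //; exists c0, d0.
have Hinv0 : invm (mk2 c0 d0 a0 b0) by apply: inv_swap; apply/inv2P.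
have [Ai [HA _]] := Hinv0.
move: HA; rewrite (mk_eta Ai) mul_mk one_mk => /mk_inj [HX _ HZ _].
case: HRK => t Ht.
have [w1 [w2 [v1 [v2 [Hch Hw]]]]] := build Hinv0 Ht Hpt n.+1.
exists (cyc a0 b0), (cyc v1 v2); split.
- by exists 0%N; exact: walk0.
- by exists n.+1.
- move=> [m Hm Hw'].
  have := main_bound HK Hdeg Hinv0 HX HZ (walk_rev Hw') Hch (unitr1 _).
  rewrite !mul1r => /(_ erefl) H; lia.
Qed.
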